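(* Let $(\beta,\gamma)$ be antiferromagnetic and $\lambda,\lambda_1,\lambda_2>0$. Let $G=(V,E)$ be a graph and $S\subseteq V$. For $i\in\{1,2\}$ let $\boldsymbol{\lambda}_i$ be the field vector on $V$ in which every $v\in S$ has field $\lambda_i$ and every $v\in V\setminus S$ has field $\lambda$, and let $\mu_i=\mu_{G;\beta,\gamma,\boldsymbol{\lambda}_i}$. Then for every $v\in V$, $$\big|\mathbf{E}_{\sigma\sim\mu_2}[\sigma(v)]-\mathbf{E}_{\sigma\sim\mu_1}[\sigma(v)]\big|\leq 2|S|\,\Big|\frac{\lambda_2}{\lambda_1}-1\Big|.$$
   Context: A pair $(\beta,\gamma)$ with $\beta,\gamma\geq0$ is antiferromagnetic if $\beta\gamma\in[0,1)$ and at least one is nonzero. For a graph $G=(V,E)$ and a field vector $\boldsymbol{\lambda}=(\lambda_v)_{v\in V}$ of positive reals, $\mu_{G;\beta,\gamma,\boldsymbol{\lambda}}(\sigma)=w(\sigma)/Z$ for $\sigma:V\to\{0,1\}$, where $w(\sigma)=\beta^{m_0(\sigma)}\gamma^{m_1(\sigma)}\prod_{v:\sigma(v)=1}\lambda_v$, $m_0,m_1$ are the numbers of edges with both endpoints spin $0$, resp. spin $1$ (convention $0^0=1$), and $Z=\sum_\sigma w(\sigma)$. *)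

(* Defs.v *)
From mathcomp Require Import all_boot all_order all_algebra.
Set Implicit Arguments. Unset Strict Implicit. Unset Printing Implicit Defensive.
Import Order.TTheory GRing.Theory Num.Theory.
Local Open Scope ring_scope.

Definition simple_graph (V : finType) (E : {set {set V}}) : Prop :=
  forall f, f \in E -> #|f| = 2%N.

(* spin configurations sigma : V -> {0,1}; true = spin 1 *)
Definition config (V : finType) := {ffun V -> bool}.

Definition mono_edges (V : finType) (E : {set {set V}}) (s : bool)
  (sigma : config V) : nat :=
  #|[set f in E | [forall v in f, sigma v == s]]|.

Definition antiferro (R : realFieldType) (beta gamma : R) : Prop :=
  0 <= beta /\ 0 <= gamma /\ beta * gamma < 1 /\ (beta != 0 \/ gamma != 0).

(* weight w(sigma); x ^+ 0 = 1 gives the convention 0^0 = 1 *)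
Definition weight (R : realFieldType) (V : finType) (E : {set {set V}})
  (beta gamma : R) (lam : V -> R) (sigma : config V) : R :=
  beta ^+ mono_edges E false sigma * gamma ^+ mono_edges E true sigma *
  \prod_(v | sigma v) lam v.

Definition partition_fn (R : realFieldType) (V : finType) (E : {set {set V}})
  (beta gamma : R) (lam : V -> R) : R :=
  \sum_(sigma : config V) weight E beta gamma lam sigma.

Definition gibbs (R : realFieldType) (V : finType) (E : {set {set V}})
  (beta gamma : R) (lam : V -> R) (sigma : config V) : R :=
  weight E beta gamma lam sigma / partition_fn E beta gamma lam.

Definition spin_expect (R : realFieldType) (V : finType) (E : {set {set V}})
  (beta gamma : R) (lam : V -> R) (v : V) : R :=
  \sum_(sigma : config V) gibbs E beta gamma lam sigma * (sigma v)%:R.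

Definition field_vec (R : realFieldType) (V : finType) (S : {set V})
  (lamS lam : R) : V -> R :=
  fun v => if v \in S then lamS else lam.

(* Main.v *)
Require Import Defs.
From mathcomp Require Import all_boot all_order all_algebra.
From mathcomp Require Import lra.
Import Order.TTheory GRing.Theory Num.Theory.
Local Open Scope ring_scope.

Lemma tv_bound (R : realFieldType) (T : finType) (p p' f : T -> R) (c : R) :
  (forall t, 0 <= p t) -> \sum_t p t = 1 -> \sum_t p' t = 1 ->
  (forall t, c * p t <= p' t) -> (forall t, 0 <= f t <= 1) ->
  `| \sum_t p' t * f t - \sum_t p t * f t | <= 1 - c.
Proof.
move=> p0 s1 s1' hc hf.
have hA0 : 0 <= \sum_t p t * f t.
  by apply: sumr_ge0 => t _; have /andP[? ?] := hf t; exact: mulr_ge0.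
have hA1 : \sum_t p t * f t <= 1.
  rewrite -s1; apply: ler_sum => t _; have /andP[? ?] := hf t.
  by rewrite -[leRHS]mulr1; apply: ler_wpM2l.
have hc1 : c <= 1.
  by rewrite -s1' -[c]mulr1 -s1 mulr_sumr; apply: ler_sum => t _.
have h1 : c * \sum_t p t * f t <= \sum_t p' t * f t.
  rewrite mulr_sumr; apply: ler_sum => t _; have /andP[? ?] := hf t.
  by rewrite mulrA; apply: ler_wpM2r.
have h2 : c * \sum_t p t * (1 - f t) <= \sum_t p' t * (1 - f t).
  rewrite mulr_sumr; apply: ler_sum => t _; have /andP[? ?] := hf t.
  by rewrite mulrA; apply: ler_wpM2r; rewrite // subr_ge0.
have e1 : \sum_t p t * (1 - f t) = 1 - \sum_t p t * f t.
  rewrite -[X in X - _]s1 -sumrB; apply: eq_bigr => t _; by rewrite mulrBr mulr1.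
have e2 : \sum_t p' t * (1 - f t) = 1 - \sum_t p' t * f t.
  rewrite -[X in X - _]s1' -sumrB; apply: eq_bigr => t _; by rewrite mulrBr mulr1.
rewrite e1 e2 in h2.
rewrite ler_norml; apply/andP; split; nra.
Qed.

Lemma prod_fv (R : realFieldType) (V : finType) (S : {set V}) (x lam : R)
  (sigma : config V) :
  \prod_(v | sigma v) field_vec S x lam v =
  x ^+ #|[pred v | sigma v && (v \in S)]| *
  \prod_(v | sigma v && (v \notin S)) lam.
Proof.
rewrite (bigID (fun v => v \in S)) /=; congr (_ * _).
  rewrite -prodr_const; apply: eq_bigr => v /=; rewrite ?inE /field_vec => /andP[_ ->] //.
by apply: eq_bigr => v; rewrite /field_vec => /andP[_ /negbTE ->].
Qed.

Lemma card_k_le (V : finType) (S : {set V}) (sigma : config V) :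
  (#|[pred v | sigma v && (v \in S)]| <= #|S|)%N.
Proof. by apply: subset_leq_card; apply/subsetP => v /andP[]. Qed.

Lemma weight_ge0 (R : realFieldType) (V : finType) (E : {set {set V}})
  (beta gamma : R) (lam : V -> R) sigma :
  0 <= beta -> 0 <= gamma -> (forall v, 0 <= lam v) ->
  0 <= weight E beta gamma lam sigma.
Proof.
move=> hb hg hl; rewrite /weight; apply: mulr_ge0; first apply: mulr_ge0;
  [exact: exprn_ge0 | exact: exprn_ge0 | exact: prodr_ge0].
Qed.

Lemma mono0 (V : finType) (E : {set {set V}}) (s : bool) :
  simple_graph E -> mono_edges E s [ffun _ => ~~ s] = 0%N.
Proof.
move=> sg; rewrite /mono_edges; apply/eqP; rewrite cards_eq0; apply/eqP.
apply/setP => f; rewrite !inE; apply/negP => /andP[fE /forallP H].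
have : (0 < #|f|)%N by rewrite (sg f fE).
case/card_gt0P => x xf; have := H x; rewrite xf ffunE /=.
by case: (s) H.
Qed.

Lemma Z_gt0 (R : realFieldType) (V : finType) (E : {set {set V}})
  (beta gamma : R) (lam : V -> R) :
  antiferro beta gamma -> (forall v, 0 < lam v) -> simple_graph E ->
  0 < partition_fn E beta gamma lam.
Proof.
move=> [hb [hg [_ hne]]] hl sg.
have hl' : forall v, 0 <= lam v by move=> v; exact: ltW.
have hle : forall s, weight E beta gamma lam s <= partition_fn E beta gamma lam.
  move=> s; rewrite /partition_fn (bigD1 s) //= lerDl.
  by apply: sumr_ge0 => t _; exact: weight_ge0.
case: hne => hne.
- apply: (lt_le_trans _ (hle [ffun _ => ~~ true])).
  rewrite /weight mono0 // expr0 mulr1.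
  apply: mulr_gt0; first by apply: exprn_gt0; rewrite lt_def hne.
  by rewrite big_pred0 // => v; rewrite ffunE.
- apply: (lt_le_trans _ (hle [ffun _ => ~~ false])).
  rewrite /weight mono0 // expr0 mul1r.
  apply: mulr_gt0; first by apply: exprn_gt0; rewrite lt_def hne.
  by apply: prodr_gt0 => v _.
Qed.

Lemma one_sub_exp (R : realFieldType) (q : R) (n : nat) :
  0 <= q -> q <= 1 -> 1 - q ^+ n <= n%:R * (1 - q).
Proof.
move=> h0 h1; elim: n => [|n IH]; first by rewrite expr0 subrr mul0r.
have hqn0 : 0 <= q ^+ n by exact: exprn_ge0.
have hqn1 : q ^+ n <= 1 by exact: exprn_ile1.
have hn : 0 <= n%:R :> R by exact: ler0n.
rewrite exprS -natr1.
have H : q * (1 - q ^+ n) <= q * (n%:R * (1 - q)) by apply: ler_wpM2l.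
nra.
Qed.

Lemma key (R : realFieldType) (beta gamma lam lo hi : R)
  (V : finType) (E : {set {set V}}) (S : {set V}) (v : V) :
  antiferro beta gamma -> 0 < lam -> 0 < lo -> lo <= hi ->
  simple_graph E ->
  `| spin_expect E beta gamma (field_vec S hi lam) v
     - spin_expect E beta gamma (field_vec S lo lam) v |
  <= #|S|%:R * (1 - lo / hi).
Proof.
move=> af hlam hlo hlohi sg.
have [hb [hg _]] := af.
have hhi : 0 < hi by exact: lt_le_trans hlohi.
set q := lo / hi.
have hq0 : 0 <= q by rewrite /q divr_ge0 // ltW.
have hq1 : q <= 1 by rewrite /q ler_pdivrMr // mul1r.
have hfv : forall x, 0 < x -> forall u, 0 < field_vec S x lam u.
  by move=> x hx u; rewrite /field_vec; case: (u \in S).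
set wl := weight E beta gamma (field_vec S lo lam).
set wh := weight E beta gamma (field_vec S hi lam).
have wl0 : forall s, 0 <= wl s.
  by move=> s; apply: weight_ge0 => // u; apply: ltW; apply: hfv.
have hw : forall s, wl s <= wh s /\ q ^+ #|S| * wh s <= wl s.
  move=> s; rewrite /wl /wh /weight !prod_fv.
  set C := beta ^+ _ * gamma ^+ _.
  set L := \prod_(_ | _) _.
  set k := #|[pred v | s v & v \in S]|.
  have C0 : 0 <= C by apply: mulr_ge0; apply: exprn_ge0.
  have L0 : 0 <= L by apply: prodr_ge0 => u _; apply: ltW.
  have hk : (k <= #|S|)%N by exact: card_k_le.
  split.
    apply: ler_wpM2l => //; apply: ler_wpM2r => //.
    by apply: lerXn2r => //; rewrite nnegrE ltW.
  rewrite mulrCA; apply: ler_wpM2l => //; rewrite mulrA; apply: ler_wpM2r => //.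
  have -> : lo ^+ k = q ^+ k * hi ^+ k by rewrite -exprMn /q divfK // gt_eqF.
  apply: ler_wpM2r; first by apply: exprn_ge0; apply: ltW.
  exact: ler_wiXn2l.
set Zl := partition_fn E beta gamma (field_vec S lo lam).
set Zh := partition_fn E beta gamma (field_vec S hi lam).
have Zl0 : 0 < Zl by apply: Z_gt0 => //; apply: hfv.
have Zh0 : 0 < Zh by apply: Z_gt0 => //; apply: hfv.
have Zle : q ^+ #|S| * Zh <= Zl.
  rewrite /Zh /Zl /partition_fn mulr_sumr; apply: ler_sum => s _.
  by have [] := hw s.
have sum1 : forall x, 0 < x ->
    \sum_s gibbs E beta gamma (field_vec S x lam) s = 1.
  move=> x hx; rewrite /gibbs -mulr_suml divff //.
  by apply: lt0r_neq0; apply: Z_gt0 => //; apply: hfv.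
apply: le_trans (_ : 1 - q ^+ #|S| <= _); last exact: one_sub_exp.
apply: tv_bound.
- move=> s; rewrite /gibbs; apply: divr_ge0; first exact: wl0.
  exact: ltW.
- exact: sum1.
- exact: sum1.
- move=> s; rewrite /gibbs -/wl -/wh -/Zl -/Zh.
  have [h1 _] := hw s.
  apply: (@le_trans _ _ (wl s / Zh)); last first.
    by apply: ler_wpM2r => //; rewrite invr_ge0 ltW.
  rewrite mulrCA; apply: ler_wpM2l => //.
  by rewrite ler_pdivrMr // ler_pdivlMl // mulrC.
- by move=> s; case: (s v); rewrite ?ler01 ?lexx.
Qed.

Theorem lemma5p2 (R : realFieldType) (beta gamma lam lam1 lam2 : R)
  (V : finType) (E : {set {set V}}) (S : {set V}) :
  antiferro beta gamma -> 0 < lam -> 0 < lam1 -> 0 < lam2 ->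
  simple_graph E ->
  forall v : V,
    `| spin_expect E beta gamma (field_vec S lam2 lam) v
       - spin_expect E beta gamma (field_vec S lam1 lam) v |
    <= 2 * #|S|%:R * `| lam2 / lam1 - 1 |.
Proof.
move=> af hl h1 h2 sg v.
have hn : 0 <= #|S|%:R :> R by exact: ler0n.
set b := lam2 / lam1.
have hb0 : 0 < b by rewrite /b divr_gt0.
case: (lerP lam1 lam2) => h12.
- apply: le_trans (@key _ _ _ _ _ _ _ _ S v af hl h1 h12 sg) _.
  set a := lam1 / lam2.
  have ha0 : 0 < a by rewrite /a divr_gt0.
  have hab : a * b = 1 by rewrite /a /b mulrA divfK ?divff // gt_eqF.
  have ha1 : a <= 1 by rewrite /a ler_pdivrMr // mul1r.
  have hbb : b - 1 <= `|b - 1| by exact: ler_norm.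
  have H : 1 - a <= b - 1 by nra.
  have H2 : #|S|%:R * (1 - a) <= #|S|%:R * `|b - 1| by apply: ler_wpM2l => //; lra.
  have H3 : 0 <= #|S|%:R * `|b - 1| by apply: mulr_ge0.
  rewrite -mulrA; lra.
- rewrite distrC.
  apply: le_trans (@key _ _ _ _ _ _ _ _ S v af hl h2 (ltW h12) sg) _.
  have hb1 : b <= 1 by rewrite /b ler_pdivrMr // mul1r ltW.
  have -> : `|b - 1| = 1 - b by rewrite distrC ger0_norm // subr_ge0.
  have H3 : 0 <= #|S|%:R * (1 - b) by apply: mulr_ge0 => //; lra.
  rewrite -/b -mulrA; lra.
Qed.
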